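(* For every graph $G$ and every $k\in\mathbb{N}$: if $\delta^{\infty}_{\rm e}(G)\leq k$, then $G\in\mathcal{A}_k^{(\leq k)}$. Conversely, for every $k\in\mathbb{N}_{\geq1}$, every graph $G\in\mathcal{A}_k^{(\leq k)}$ satisfies $\delta^{\infty}_{\rm e}(G)\leq 2k-1$.
   Context: All graphs are finite, undirected, loopless, and may have parallel edges; $\deg_G(v)$ is the number of edges incident to $v$ (counted with multiplicity), $E_G(v)$ the multiset of these edges. $\delta^{\infty}_{\rm e}(G)$ (edge-admissibility) is the minimum, over all linear orderings $\langle v_1,\dots,v_n\rangle$ of $V(G)$, of $\max_i \lambda_i$, where $\lambda_i$ is the minimum number of edges whose removal destroys all paths from $v_i$ to $\{v_1,\dots,v_{i-1}\}$ ($\lambda_1=0$); equivalently the maximum number of pairwise edge-disjoint paths from $v_i$ to $\{v_1,\dots,v_{i-1}\}$. Edge sums: let $G_1,G_2$ be disjoint graphs, $v_1\in V(G_1)$, $v_2\in V(G_2)$ with $\deg_{G_1}(v_1)=\deg_{G_2}(v_2)=k'$, and $\sigma:E_{G_1}(v_1)\to E_{G_2}(v_2)$ a bijection. The $k'$-edge sum of $G_1$ and $G_2$ on $v_1,v_2$ w.r.t. $\sigma$ is obtained from the disjoint union by deleting $v_1$ and $v_2$ and, for each edge $e=v_1x\in E_{G_1}(v_1)$ with $\sigma(e)=v_2y$, adding a new edge $xy$. A graph is a $(\leq k)$-edge sum of $G_1$ and $G_2$ if it is their disjoint union or a $k'$-edge sum of them for some $k'\in\{1,\dots,k\}$ and some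 choice of $v_1,v_2,\sigma$. $\mathcal{A}_k$ is the class of graphs in which all vertices except possibly one have degree at most $k$. $\mathcal{A}_k^{(\leq k)}$ is the smallest class of graphs containing $\mathcal{A}_k$ and containing every $(\leq k)$-edge sum of any two of its members. *)

(* Defs.v *)
From mathcomp Require Import all_boot.
Set Implicit Arguments. Unset Strict Implicit. Unset Printing Implicit Defensive.

(* A finite, undirected, loopless multigraph: every edge e has two distinct
   endpoints src e, tgt e (the orientation is irrelevant everywhere below);
   parallel edges are distinct elements of [edge]. *)
Record mgraph := MGraph {
  vert : finType;
  edge : finType;
  src : edge -> vert;
  tgt : edge -> vert;
  loopless : forall e, src e != tgt e }.

Arguments src {m} e.
Arguments tgt {m} e.

Section Basic.
Variable G : mgraph.

Definition incident (v : vert G) (e : edge G) : bool := (src e == v) || (tgt e == v).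

Definition deg (v : vert G) : nat := #|[set e | incident v e]|.

Definition other (v : vert G) (e : edge G) : vert G := if src e == v then tgt e else src e.

Lemma other_neq v e : incident v e -> other v e != v.
Proof.
rewrite /incident /other; case: eqP => [<- _|_ /= /eqP <-].
  by rewrite eq_sym loopless.
exact: loopless.
Qed.

Lemma src_nincident v e : ~~ incident v e -> src e != v.
Proof. by rewrite /incident negb_or => /andP[]. Qed.

Lemma tgt_nincident v e : ~~ incident v e -> tgt e != v.
Proof. by rewrite /incident negb_or => /andP[]. Qed.

Definition adj_minus (F : {set edge G}) : rel (vert G) :=
  [rel x y | [exists e, (e \notin F) &&
      (((src e == x) && (tgt e == y)) || ((src e == y) && (tgt e == x)))]].

Definition separates (F : {set edge G}) (v : vert G) (S : {set vert G}) : bool :=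
  [forall s in S, ~~ connect (adj_minus F) v s].

(* lambda(v, S): minimum number of edges whose removal destroys all paths
   from v to S (the edge set of G always works when v \notin S, so the
   default #|edge G| of the min is harmless). *)
Definition lambda (S : {set vert G}) (v : vert G) : nat :=
  \big[minn/#|edge G|]_(F : {set edge G} | separates F v S) #|F|.

(* edge-admissibility: min over linear orderings <v_0,...,v_{n-1}> of V(G)
   (bijections 'I_n -> V(G)) of max_i lambda(v_i, {v_j | j < i}). *)
Definition edge_adm : nat :=
  \big[minn/#|edge G|]_(f : {ffun 'I_#|vert G| -> vert G} | injectiveb f)
     \max_(i < #|vert G|) lambda [set f j | j : 'I_#|vert G| & (j < i)%N] (f i).

End Basic.

Definition iso (G H : mgraph) : Prop :=
  exists (fV : vert G -> vert H) (fE : edge G -> edge H),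
    [/\ bijective fV, bijective fE &
      forall e, ((src (fE e) == fV (src e)) && (tgt (fE e) == fV (tgt e)))
             || ((src (fE e) == fV (tgt e)) && (tgt (fE e) == fV (src e)))].

Definition inA (k : nat) (G : mgraph) : bool :=
  #|[set v : vert G | k < deg v]| <= 1.

Section DUnion.
Variables G1 G2 : mgraph.
Definition du_src (e : edge G1 + edge G2) : vert G1 + vert G2 :=
  match e with inl e1 => inl (src e1) | inr e2 => inr (src e2) end.
Definition du_tgt (e : edge G1 + edge G2) : vert G1 + vert G2 :=
  match e with inl e1 => inl (tgt e1) | inr e2 => inr (tgt e2) end.
Lemma du_loopless e : du_src e != du_tgt e.
Proof. by case: e => e /=; rewrite inj_eq ?loopless //; [exact: inl_inj | exact: inr_inj]. Qed.
Definition dunion : mgraph := MGraph du_loopless.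
End DUnion.

(* Edges: the edges of G1 not at v1, the edges of
   G2 not at v2, and, for each edge e of G1 at v1, a new edge joining the
   other endpoint of e to the other endpoint of sigma(e) (in G2). *)
Section ESum.
Variables (G1 G2 : mgraph) (v1 : vert G1) (v2 : vert G2) (sigma : edge G1 -> edge G2).
Hypothesis hsigma : forall e, incident v1 e -> incident v2 (sigma e).

Definition es_vert : finType := ({x : vert G1 | x != v1} + {y : vert G2 | y != v2})%type.
Definition es_edge : finType :=
  (({e : edge G1 | ~~ incident v1 e} + {e : edge G2 | ~~ incident v2 e})
     + {e : edge G1 | incident v1 e})%type.

Definition es_src (e : es_edge) : es_vert :=
  match e with
  | inl (inl (exist e1 h)) => inl (exist _ (src e1) (src_nincident h))
  | inl (inr (exist e2 h)) => inr (exist _ (src e2) (src_nincident h))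
  | inr (exist e1 h) => inl (exist _ (other v1 e1) (other_neq h))
  end.
Definition es_tgt (e : es_edge) : es_vert :=
  match e with
  | inl (inl (exist e1 h)) => inl (exist _ (tgt e1) (tgt_nincident h))
  | inl (inr (exist e2 h)) => inr (exist _ (tgt e2) (tgt_nincident h))
  | inr (exist e1 h) => inr (exist _ (other v2 (sigma e1)) (other_neq (hsigma h)))
  end.
Lemma es_loopless e : es_src e != es_tgt e.
Proof.
case: e => [[[e h]|[e h]]|[e h]] //=.
- apply/negP => /eqP [] /eqP; exact/negP/loopless.
- apply/negP => /eqP [] /eqP; exact/negP/loopless.
Qed.
Definition edge_sum : mgraph := MGraph es_loopless.
End ESum.

(* The class A_k^{(<= k)}: smallest class containing A_k and closed under
   (<= k)-edge sums (disjoint union, or k'-edge sums with 1 <= k' <= k),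
   graphs being taken up to isomorphism. *)
Inductive inAsum (k : nat) : mgraph -> Prop :=
  | inAsum_base G : inA k G -> inAsum k G
  | inAsum_union G1 G2 G :
      inAsum k G1 -> inAsum k G2 -> iso G (dunion G1 G2) -> inAsum k G
  | inAsum_sum G1 G2 G (v1 : vert G1) (v2 : vert G2) (sigma : edge G1 -> edge G2)
      (hsigma : forall e, incident v1 e -> incident v2 (sigma e)) :
      inAsum k G1 -> inAsum k G2 ->
      deg v1 = deg v2 ->
      0 < deg v1 <= k ->
      {in [pred e | incident v1 e] &, injective sigma} ->
      (forall f, incident v2 f -> exists2 e, incident v1 e & sigma e = f) ->
      iso G (edge_sum hsigma) -> inAsum k G.

(* Main.v *)
Require Import Defs.
From mathcomp Require Import all_boot zify.
Set Implicit Arguments. Unset Strict Implicit. Unset Printing Implicit Defensive.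

Section Cut.
Variable G : mgraph.
Implicit Types (S Y : {set vert G}) (u v : vert G).

Definition crosses Y (e : edge G) : bool := (src e \in Y) != (tgt e \in Y).
Definition dcut Y : nat := #|[set e | crosses Y e]|.

Lemma bigmin_le (I : finType) (P : pred I) (F : I -> nat) d j :
  P j -> \big[minn/d]_(i | P i) F i <= F j.
Proof.
move=> Pj; rewrite -big_filter.
have : j \in [seq i <- index_enum I | P i] by rewrite mem_filter Pj mem_index_enum.
elim: [seq i <- index_enum I | P i] => //= a l IH; rewrite inE big_cons.
case/orP => [/eqP ->|/IH h]; first exact: geq_minl.
by rewrite geq_min h orbT.
Qed.

Lemma lambda_le F S v : separates F v S -> lambda S v <= #|F|.
Proof. by move=> h; rewrite /lambda; apply: bigmin_le. Qed.

Lemma lambda_le_edge S v : lambda S v <= #|edge G|.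
Proof.
rewrite /lambda; elim/big_ind: _ => //= [x y hx hy|F _]; first by rewrite geq_min hx.
exact: max_card.
Qed.

Lemma adj_cut Y u c : adj_minus [set e | crosses Y e] u c -> (u \in Y) = (c \in Y).
Proof.
move=> /existsP [e /andP[]]; rewrite inE negbK /crosses => /eqP heq.
by case/orP=> /andP[/eqP <- /eqP <-].
Qed.

Lemma separates_cut Y S u : u \in Y -> (forall x, x \in Y -> x \notin S) -> separates [set e | crosses Y e] u S.
Proof.
move=> uY dis; apply/forall_inP => s sS; apply/negP => /connectP [p pth hs].
suff : last u p \in Y by rewrite -hs => /dis; rewrite sS.
clear hs; elim: p u uY pth => [|c p IH] u uY //= /andP[hadj hp].
by apply: IH hp; rewrite -(adj_cut hadj).
Qed.

Lemma lam_cut S Y u : u \in Y -> (forall x, x \in Y -> x \notin S) -> lambda S u <= dcut Y.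
Proof. by move=> uY dis; apply: lambda_le; apply: separates_cut. Qed.

Lemma lam_ex S u : u \notin S ->
  exists Y, [/\ u \in Y, (forall x, x \in Y -> x \notin S) & dcut Y <= lambda S u].
Proof.
move=> uS.
have [F [hF hc]] : exists F, separates F u S /\ #|F| <= lambda S u.
  rewrite /lambda; elim/big_ind: _ => [|x y [F [h1 h2]] [F' [h1' h2']]|F hF].
  - exists setT; split; last by rewrite cardsT.
    apply/forall_inP => s sS; apply/negP => /connectP [[|c p] /= pth hs].
      by move: sS; rewrite hs (negbTE uS).
    by move: pth => /andP[/existsP [e /andP[]]]; rewrite inE.
  - case: (leqP x y) => hxy.
      by exists F; split => //; rewrite (minn_idPl hxy).
    by exists F'; split => //; rewrite (minn_idPr (ltnW hxy)).
  - by exists F.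
exists [set v | connect (adj_minus F) u v]; split.
- by rewrite inE connect0.
- move=> s; rewrite inE => hc'; apply/negP => sS.
  by move/forall_inP: hF => /(_ _ sS); rewrite hc'.
- apply: leq_trans hc; apply: subset_leq_card; apply/subsetP => e.
  rewrite !inE /crosses; apply: contraR => eF.
  have h1 : adj_minus F (src e) (tgt e).
    by apply/existsP; exists e; rewrite eF !eqxx.
  have h2 : adj_minus F (tgt e) (src e).
    by apply/existsP; exists e; rewrite eF !eqxx orbT.
  apply/eqP; rewrite !inE; apply/idP/idP => hc'.
    exact: connect_trans hc' (connect1 h1).
  exact: connect_trans hc' (connect1 h2).
Qed.

Lemma dcut1 v : dcut [set v] = deg v.
Proof.
rewrite /dcut /deg; apply: eq_card => e; rewrite !inE /crosses /incident !inE.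
have := loopless e.
by case: (src e =P v) => [->|_]; case: (tgt e =P v) => [->|_] //=; rewrite eqxx.
Qed.

Lemma dcutC Y : dcut (~: Y) = dcut Y.
Proof.
rewrite /dcut; apply: eq_card => e; rewrite !inE /crosses !inE.
by case: (src e \in Y); case: (tgt e \in Y).
Qed.

Lemma dcut0 : dcut setT = 0.
Proof. by rewrite /dcut; apply/eqP; rewrite cards_eq0; apply/eqP/setP => e; rewrite !inE /crosses !inE. Qed.

Lemma lam_deg S u : u \notin S -> lambda S u <= deg u.
Proof.
move=> uS; rewrite -dcut1; apply: lam_cut; first by rewrite inE.
by move=> x; rewrite inE => /eqP ->.
Qed.

Lemma lam_deg1 S u r : u != r -> S \subset [set r] -> lambda S u <= deg r.
Proof.
move=> ur sub; rewrite -dcut1 -dcutC; apply: lam_cut; first by rewrite !inE.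
move=> x; rewrite !inE => xr; apply/negP => xS.
by move/subsetP: sub => /(_ _ xS); rewrite inE (negbTE xr).
Qed.

Lemma lam_empty S u : S = set0 -> lambda S u = 0.
Proof.
move=> ->; apply/eqP; rewrite -leqn0 -dcut0; apply: lam_cut; first by rewrite inE.
by move=> x _; rewrite inE.
Qed.

Lemma dcut_sum Y : dcut Y = \sum_e (crosses Y e : nat).
Proof.
rewrite /dcut -sum1_card big_mkcond /=; apply: eq_bigr => e _; rewrite inE.
by case: (crosses Y e).
Qed.

Lemma dcut_sub (A B U I : {set vert G}) : (forall x, (x \in U) = (x \in A) || (x \in B)) ->
  (forall x, (x \in I) = (x \in A) && (x \in B)) -> dcut U + dcut I <= dcut A + dcut B.
Proof.
move=> hU hI; rewrite !dcut_sum -!big_split /=; apply: leq_sum => e _.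
rewrite /crosses !hU !hI.
by case: (src e \in A); case: (tgt e \in A); case: (src e \in B); case: (tgt e \in B).
Qed.

Lemma dcut_posi (A B U V : {set vert G}) : (forall x, (x \in U) = (x \in A) && (x \notin B)) ->
  (forall x, (x \in V) = (x \in B) && (x \notin A)) -> dcut U + dcut V <= dcut A + dcut B.
Proof.
move=> hU hI; rewrite !dcut_sum -!big_split /=; apply: leq_sum => e _.
rewrite /crosses !hU !hI.
by case: (src e \in A); case: (tgt e \in A); case: (src e \in B); case: (tgt e \in B).
Qed.

End Cut.

Section Good.
Variables (G : mgraph) (k : nat).
Implicit Types (s : seq (vert G)) (u : vert G).

Definition before (s : seq (vert G)) (u : vert G) : {set vert G} :=
  [set x | index x s < index u s].
Definition good (s : seq (vert G)) :=
  [/\ uniq s, forall x, x \in s & forall u, lambda (before s u) u <= k].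

Lemma before_irr s u : u \notin before s u.
Proof. by rewrite inE ltnn. Qed.

Lemma size_good s : uniq s -> (forall x, x \in s) -> size s = #|vert G|.
Proof.
move=> us hs; rewrite cardT; apply: perm_size; apply: uniq_perm => //.
  exact: enum_uniq.
by move=> x; rewrite mem_enum hs.
Qed.

Definition adm_val (f : {ffun 'I_#|vert G| -> vert G}) :=
  \max_(i < #|vert G|) lambda [set f j | j : 'I_#|vert G| & (j < i)%N] (f i).

Lemma setE_ord (f : {ffun 'I_#|vert G| -> vert G}) s (i : 'I_#|vert G|) :
  (forall i, index (f i) s = i) -> (forall x, exists j, x = f j) ->
  [set f j | j : 'I_#|vert G| & (j < i)%N] = before s (f i).
Proof.
move=> hidx hsurj; apply/setP => x; rewrite !inE hidx.
apply/imsetP/idP => [[j hj ->]|hx]; first by rewrite inE in hj; rewrite hidx.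
case: (hsurj x) hx => j -> hj; exists j => //; rewrite inE -(hidx j) //.
Qed.

Lemma good_adm s : good s -> edge_adm G <= k.
Proof.
case=> us hs hl.
have sz := size_good us hs.
pose f : {ffun 'I_#|vert G| -> vert G} := [ffun i => nth (enum_val i) s i].
have fE i x0 : f i = nth x0 s i.
  by rewrite ffunE; apply: set_nth_default; rewrite sz.
have injf : injective f.
  move=> i j; rewrite (fE i (f i)) (fE j (f i)) => /eqP.
  by rewrite nth_uniq ?sz // => /eqP /val_inj.
have hidx i : index (f i) s = i by rewrite (fE i (f i)) index_uniq ?sz.
have hsurj x : exists j, x = f j.
  have hx : index x s < #|vert G| by rewrite -sz index_mem.
  exists (Ordinal hx); by rewrite (fE _ x) /= nth_index.
have hinj : injectiveb f by apply/injectiveP.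
rewrite /edge_adm; apply: leq_trans (@bigmin_le _ _ _ _ f hinj) _.
apply/bigmax_leqP => i _; rewrite (setE_ord (s := s)) //; exact: hl.
Qed.

Lemma adm_good : edge_adm G <= k -> exists s, good s.
Proof.
move=> hk.
have [f [/injectiveP injf hf]] :
    exists f : {ffun 'I_#|vert G| -> vert G}, injectiveb f /\ adm_val f <= edge_adm G.
  apply: (big_ind (fun m => exists f : {ffun 'I_#|vert G| -> vert G}, injectiveb f /\ adm_val f <= m)).
  - exists [ffun i => enum_val i]; split.
      by apply/injectiveP => i j; rewrite !ffunE; exact: enum_val_inj.
    by apply/bigmax_leqP => i _; exact: lambda_le_edge.
  - move=> x y [f [h1 h2]] [f' [h1' h2']]; case: (leqP x y) => hxy.
      by exists f; split => //; rewrite (minn_idPl hxy).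
    by exists f'; split => //; rewrite (minn_idPr (ltnW hxy)).
  - by move=> f hf; exists f.
pose s := [seq f i | i <- enum 'I_#|vert G|].
have hidx i : index (f i) s = i by rewrite index_map // index_enum_ord.
have hsurj x : exists j, x = f j.
  have := inj_card_onto injf _ x; rewrite card_ord => /(_ (leqnn _)).
  by case/codomP => j ->; exists j.
exists s; split.
- by rewrite map_inj_uniq // enum_uniq.
- by move=> x; case: (hsurj x) => j ->; rewrite map_f // mem_enum.
- move=> u; case: (hsurj u) => i ->; rewrite -(setE_ord (s := s)) //.
  apply: leq_trans hk; apply: leq_trans hf.
  rewrite /adm_val; exact: leq_bigmax.
Qed.

End Good.

Section Contr.
Variables (G H : mgraph) (pi : vert G -> option (vert H)) (phi : edge G -> option (edge H)).

Definition contraction :=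
  [/\ forall e, phi e = None -> pi (src e) = pi (tgt e),
      forall e e', phi e = Some e' ->
        (pi (src e) = Some (src e') /\ pi (tgt e) = Some (tgt e')) \/
        (pi (src e) = Some (tgt e') /\ pi (tgt e) = Some (src e'))
    & forall e1 e2 e', phi e1 = Some e' -> phi e2 = Some e' -> e1 = e2].

Lemma contr_lambda (S : {set vert G}) (S' : {set vert H}) u u' : contraction -> pi u = Some u' -> u' \notin S' ->
  (forall s s', s \in S -> pi s = Some s' -> s' \in S') ->
  lambda S u <= lambda S' u'.
Proof.
case=> c1 c2 c3 hu hu' hS.
have [Y' [uY' dis hY']] := lam_ex hu'.
pose Y := [set x | if pi x is Some x' then x' \in Y' else false].
apply: leq_trans hY'; apply: leq_trans (lam_cut (Y := Y) _ _) _.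
- by rewrite inE hu.
- move=> x; rewrite inE; case E: (pi x) => [x'|] // hx; apply/negP => xS.
  by have := dis _ hx; rewrite (hS _ _ xS E).
have hcr e : crosses Y e -> exists2 e', phi e = Some e' & crosses Y' e'.
  rewrite /crosses !inE; case E: (phi e) => [e'|].
    move=> hc; exists e' => //; move: hc.
    by case: (c2 _ _ E) => [[-> ->]|[-> ->]] //; rewrite eq_sym.
  by rewrite (c1 _ E) eqxx.
rewrite /dcut.
have -> : #|[set e | crosses Y e]| = #|phi @: [set e | crosses Y e]|.
  rewrite card_in_imset // => e1 e2; rewrite !inE => /hcr [e1' h1 _] /hcr [e2' h2 _].
  by rewrite h1 h2 => -[E]; apply: c3 h1 _; rewrite h2 E.
rewrite -(card_imset [set e | crosses Y' e] (@Some_inj _)); apply: subset_leq_card.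
apply/subsetP => o /imsetP [e]; rewrite inE => /hcr [e' -> he'] ->.
by apply/imsetP; exists e'; rewrite ?inE.
Qed.

End Contr.

Lemma good_via (G : mgraph) k (t : seq (vert G)) : uniq t -> (forall x, x \in t) ->
  (forall u, exists (H : mgraph) pi phi sH u',
     [/\ @contraction G H pi phi, good k sH, pi u = Some u' &
      forall z z', index z t < index u t -> pi z = Some z' -> index z' sH < index u' sH]) ->
  good k t.
Proof.
move=> ut ht hu; split => // u.
case: (hu u) => H [pi [phi [sH [u' [hc [_ _ hl] hpu hord]]]]].
apply: leq_trans (hl u'); apply: (contr_lambda hc hpu (before_irr _ _)).
by move=> z z'; rewrite !inE => hz hz'; exact: hord hz hz'.
Qed.

Definition Inv (G : mgraph) k := forall r : vert G, exists t, good k (r :: t).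

Lemma exists_good (G : mgraph) k : Inv G k -> exists s : seq (vert G), good k s.
Proof.
move=> hI; case: (pickP (@predT (vert G))) => [r _|h].
  by case: (hI r) => t ht; exists (r :: t).
by exists [::]; split => // x; have := h x.
Qed.

Lemma good_low (G : mgraph) k (s : seq (vert G)) u : deg u <= k -> lambda (before s u) u <= k.
Proof. by move=> h; apply: leq_trans h; apply: lam_deg; apply: before_irr. Qed.

Lemma inv_iso (G H : mgraph) k : iso G H -> Inv H k -> Inv G k.
Proof.
case=> fV [fE [[gV fgV gfV] [gE fgE gfE] hE]] hH r.
case: (hH (fV r)) => t [ut ht hl].
exists (map gV t).
have -> : r :: map gV t = map gV (fV r :: t) by rewrite /= fgV.
have ginj : injective gV := can_inj gfV.
apply: good_via.
- by rewrite map_inj_uniq.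
- by move=> x; rewrite -(fgV x) map_f.
move=> u; exists H, (fun x => Some (fV x)), (fun e => Some (fE e)), (fV r :: t), (fV u).
split => //.
- split => // [e e' [<-]|e1 e2 e' [<-] [] /(can_inj fgE) //].
  by case/orP: (hE e) => /andP[/eqP -> /eqP ->]; [left|right].
- move=> z z'; rewrite -{1}(fgV z) -{1}(fgV u) !index_map // => h [<-] //.
Qed.

Lemma card_two (T : finType) (A : {set T}) a b : a \in A -> b \in A -> a != b -> 1 < #|A|.
Proof.
move=> ha hb hab; apply: leq_trans (subset_leq_card (_ : [set a; b] \subset A)).
  by rewrite cards2 hab.
by apply/subsetP => x; rewrite !inE => /orP[] /eqP ->.
Qed.

Lemma inv_base (G : mgraph) k : inA k G -> Inv G k.
Proof.
rewrite /inA => hA r.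
have uniqH (x y : vert G) : k < deg x -> k < deg y -> x = y.
  move=> hx hy; apply/eqP; apply: contraLR hA => hxy; rewrite -ltnNge.
  by apply: (@card_two _ _ x y); rewrite ?inE.
case: (pickP [pred h | (k < deg h) && (h != r)]) => [h /andP[hh hr]|nh].
- exists (h :: [seq x <- enum (vert G) | (x != r) && (x != h)]).
  have rlow : deg r <= k by rewrite leqNgt; apply/negP => /(uniqH _ _ hh) hr'; by rewrite hr' eqxx in hr.
  split.
  + rewrite /= !inE negb_or eq_sym hr /= !mem_filter !eqxx /= andbF.
    by rewrite filter_uniq ?enum_uniq.
  + move=> x; rewrite !inE mem_filter mem_enum andbT.
    by case: (x =P r) => //= _; case: (x =P h).
  + move=> u; case: (u =P r) => [->|/eqP ur].
      by rewrite lam_empty //; apply/setP => x; rewrite !inE /= eqxx.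
    case: (u =P h) => [->|/eqP uh].
      apply: leq_trans rlow; apply: lam_deg1; first by rewrite hr.
      apply/subsetP => x; rewrite !inE /= eqxx [r == h]eq_sym (negbTE hr).
      by case: (r =P x) => // ->.
    apply: good_low; rewrite leqNgt; apply/negP => hu.
    by move: uh; rewrite (uniqH _ _ hu hh) eqxx.
- exists [seq x <- enum (vert G) | x != r]; split.
  + by rewrite /= mem_filter eqxx /= filter_uniq ?enum_uniq.
  + by move=> x; rewrite inE mem_filter mem_enum andbT; case: (x =P r).
  + move=> u; case: (u =P r) => [->|/eqP ur].
      by rewrite lam_empty //; apply/setP => x; rewrite !inE /= eqxx.
    apply: good_low; rewrite leqNgt; apply/negP => hu.
    by have := nh u; rewrite /= hu ur.
Qed.

Section DU.
Variables (G1 G2 : mgraph) (k : nat).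
Let G := dunion G1 G2.
Let inlI : injective (@inl (vert G1) (vert G2)). Proof. by move=> ? ? []. Qed.
Let inrI : injective (@inr (vert G1) (vert G2)). Proof. by move=> ? ? []. Qed.

Definition pl (z : vert G) : option (vert G1) := if z is inl x then Some x else None.
Definition ql (e : edge G) : option (edge G1) := if e is inl x then Some x else None.
Definition pr (z : vert G) : option (vert G2) := if z is inr x then Some x else None.
Definition qr (e : edge G) : option (edge G2) := if e is inr x then Some x else None.

Lemma contr_l : contraction pl ql.
Proof.
split.
- by case.
- by case=> // e e' [<-]; left.
- by case=> // e1 [] // e2 e' [->] [->].
Qed.

Lemma contr_r : contraction pr qr.
Proof.
split.
- by case.
- by case=> // e e' [<-]; left.
- by case=> // e1 [] // e2 e' [->] [->].
Qed.

Lemma uniq_du (T1 T2 : eqType) (s1 : seq T1) (s2 : seq T2) :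
  uniq s1 -> uniq s2 -> uniq (map inl s1 ++ map inr s2) /\ uniq (map inr s2 ++ map inl s1).
Proof.
move=> u1 u2.
have i1 : injective (@inl T1 T2) by move=> ? ? [].
have i2 : injective (@inr T1 T2) by move=> ? ? [].
rewrite !cat_uniq !(map_inj_uniq i1) !(map_inj_uniq i2) u1 u2 /= !andbT.
split; apply/hasPn => z /mapP [y _ ->]; by apply/mapP => [[x _]].
Qed.

Lemma good_du_l (s1 : seq (vert G1)) (s2 : seq (vert G2)) :
  good k s1 -> good k s2 -> good k (map inl s1 ++ map inr s2 : seq (vert G)).
Proof.
move=> [u1 h1 l1] [u2 h2 l2].
have il a : index (inl a : vert G) (map inl s1 ++ map inr s2) = index a s1.
  by rewrite index_cat (mem_map inlI) h1 (index_map inlI).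
have ir b : index (inr b : vert G) (map inl s1 ++ map inr s2) = size s1 + index b s2.
  rewrite index_cat size_map ?(index_map inrI) ?(index_map inlI).
  by case: ifP => // /mapP [].
apply: good_via.
- by case: (uniq_du u1 u2).
- by case=> [x|y]; rewrite mem_cat ?(mem_map inlI) ?(mem_map inrI) ?h1 ?h2 ?orbT.
case=> [x|y].
- exists G1, pl, ql, s1, x; split => //; first exact: contr_l.
  by case=> // z z'; rewrite !il => h [<-].
- exists G2, pr, qr, s2, y; split => //; first exact: contr_r.
  by case=> // z z'; rewrite !ir ltn_add2l => h [<-].
Qed.

Lemma good_du_r (s1 : seq (vert G1)) (s2 : seq (vert G2)) :
  good k s1 -> good k s2 -> good k (map inr s2 ++ map inl s1 : seq (vert G)).
Proof.
move=> [u1 h1 l1] [u2 h2 l2].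
have ir b : index (inr b : vert G) (map inr s2 ++ map inl s1) = index b s2.
  by rewrite index_cat (mem_map inrI) h2 (index_map inrI).
have il a : index (inl a : vert G) (map inr s2 ++ map inl s1) = size s2 + index a s1.
  rewrite index_cat size_map ?(index_map inrI) ?(index_map inlI).
  by case: ifP => // /mapP [].
apply: good_via.
- by case: (uniq_du u1 u2).
- by case=> [x|y]; rewrite mem_cat ?(mem_map inlI) ?(mem_map inrI) ?h1 ?h2 ?orbT.
case=> [x|y].
- exists G1, pl, ql, s1, x; split => //; first exact: contr_l.
  by case=> // z z'; rewrite !il ltn_add2l => h [<-].
- exists G2, pr, qr, s2, y; split => //; first exact: contr_r.
  by case=> // z z'; rewrite !ir => h [<-].
Qed.

Lemma inv_du : Inv G1 k -> Inv G2 k -> Inv G k.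
Proof.
move=> i1 i2; case=> [x|y].
- case: (i1 x) => t ht; case: (exists_good i2) => s2 hs2.
  by exists (map inl t ++ map inr s2); apply: (good_du_l ht hs2).
- case: (i2 y) => t ht; case: (exists_good i1) => s1 hs1.
  by exists (map inr t ++ map inl s1); apply: (good_du_r hs1 ht).
Qed.

End DU.

Lemma index_pmap_lt (T : eqType) (P : pred T) (s : seq T) (x y : {x : T | P x}) :
  index x (pmap insub s) < index y (pmap insub s) -> index (val x) s < index (val y) s.
Proof.
elim: s => //= a s IH; case: insubP => [u Pa <-|nPa] /=.
- by rewrite !(inj_eq val_inj); case: (u == x) => //; case: (u == y).
- have hx : (a == val x) = false.
    by apply/negbTE; apply: contra nPa => /eqP ->; exact: valP.
  have hy : (a == val y) = false.
    by apply/negbTE; apply: contra nPa => /eqP ->; exact: valP.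
  by rewrite hx hy.
Qed.

Lemma index_head (T : eqType) (v : T) (t : seq T) (y : {y : T | y != v}) :
  index v (v :: t) < index (val y) (v :: t).
Proof. by rewrite /= eqxx eq_sym (negbTE (valP y)). Qed.

Lemma index_lt_size (T : eqType) (x : T) s : x \in s -> index x s < size s.
Proof. by rewrite index_mem. Qed.

Section ES.
Variables (G1 G2 : mgraph) (v1 : vert G1) (v2 : vert G2) (sigma : edge G1 -> edge G2).
Hypothesis hsigma : forall e, incident v1 e -> incident v2 (sigma e).
Hypothesis hinj : {in [pred e | incident v1 e] &, injective sigma}.
Variable k : nat.
Let G := edge_sum hsigma.
Let V1 := {x : vert G1 | x != v1}.
Let V2 := {y : vert G2 | y != v2}.
Let inlI : injective (@inl V1 V2). Proof. by move=> ? ? []. Qed.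
Let inrI : injective (@inr V1 V2). Proof. by move=> ? ? []. Qed.

Definition p1 (z : vert G) : option (vert G1) :=
  match z with inl x => Some (val x) | inr _ => Some v1 end.
Definition q1 (e : edge G) : option (edge G1) :=
  match e with inl (inl e1) => Some (val e1) | inl (inr _) => None | inr e1 => Some (val e1) end.
Definition p2 (z : vert G) : option (vert G2) :=
  match z with inl _ => Some v2 | inr y => Some (val y) end.
Definition q2 (e : edge G) : option (edge G2) :=
  match e with inl (inl _) => None | inl (inr e2) => Some (val e2) | inr e1 => Some (sigma (val e1)) end.

Lemma contr_1 : contraction p1 q1.
Proof.
split.
- by case=> [[[e h]|[e h]]|[e h]].
- case=> [[[e h]|[e h]]|[e h]] e' //= [<-]; first by left.
  rewrite /other; case: (src e =P v1) => [hs|hs]; first by right; rewrite hs.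
  by left; move: h; rewrite /incident; case: (src e =P v1) => //= _ /eqP ->.
- case=> [[[a ha]|[a ha]]|[a ha]] [[[b hb]|[b hb]]|[b hb]] e' //= [<-] [E].
  + by subst; rewrite (bool_irrelevance ha hb).
  + by case/negP: ha; rewrite -E.
  + by case/negP: hb; rewrite E.
  + by subst; rewrite (bool_irrelevance ha hb).
Qed.

Lemma contr_2 : contraction p2 q2.
Proof.
split.
- by case=> [[[e h]|[e h]]|[e h]].
- case=> [[[e h]|[e h]]|[e h]] e' //= [<-]; first by left.
  have h' := hsigma h.
  rewrite /other; case: (src (sigma e) =P v2) => [hs|hs]; first by left; rewrite hs.
  by right; move: h'; rewrite /incident; case: (src (sigma e) =P v2) => //= _ /eqP ->.
- case=> [[[a ha]|[a ha]]|[a ha]] [[[b hb]|[b hb]]|[b hb]] e' //= [<-] [E].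
  + by subst; rewrite (bool_irrelevance ha hb).
  + by case/negP: ha; rewrite -E hsigma.
  + by case/negP: hb; rewrite E hsigma.
  + have E' := hinj hb ha E; subst.
    by rewrite (bool_irrelevance ha hb).
Qed.

Lemma good_es_l (s1 : seq (vert G1)) t2 :
  good k s1 -> good k (v2 :: t2) ->
  good k (map inl (pmap insub s1) ++ map inr (pmap insub (v2 :: t2)) : seq (vert G)).
Proof.
set s2 := v2 :: t2.
move=> [u1 h1 l1] [u2 h2 l2].
set l1' := pmap insub s1 : seq V1; set l2' := pmap insub s2 : seq V2.
have m1 x : x \in l1' by rewrite mem_pmap_sub.
have m2 y : y \in l2' by rewrite mem_pmap_sub.
have il a : index (inl a : vert G) (map inl l1' ++ map inr l2') = index a l1'.
  by rewrite index_cat (mem_map inlI) m1 (index_map inlI).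
have ir b : index (inr b : vert G) (map inl l1' ++ map inr l2') = size l1' + index b l2'.
  rewrite index_cat size_map ?(index_map inrI).
  by case: ifP => // /mapP [].
apply: good_via.
- by case: (@uniq_du _ _ l1' l2' (pmap_sub_uniq _ u1) (pmap_sub_uniq _ u2)).
- by case=> [x|y]; rewrite mem_cat ?(mem_map inlI) ?(mem_map inrI) ?m1 ?m2 ?orbT.
case=> [x|y].
- exists G1, p1, q1, s1, (val x); split => //; first exact: contr_1.
  case=> [x'|y'] z'; rewrite il ?il ?ir => h.
    by move=> [<-]; apply: index_pmap_lt.
  move=> _; have := leq_ltn_trans (leq_addr _ _) h.
  by rewrite ltnNge ltnW // index_lt_size.
- exists G2, p2, q2, s2, (val y); split => //; first exact: contr_2.
  case=> [x'|y'] z'; rewrite ir ?il ?ir => h [<-].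
    exact: index_head.
  by apply: index_pmap_lt; move: h; rewrite ltn_add2l.
Qed.

Lemma good_es_r (s2 : seq (vert G2)) t1 :
  good k (v1 :: t1) -> good k s2 ->
  good k (map inr (pmap insub s2) ++ map inl (pmap insub (v1 :: t1)) : seq (vert G)).
Proof.
set s1 := v1 :: t1.
move=> [u1 h1 l1] [u2 h2 l2].
set l1' := pmap insub s1 : seq V1; set l2' := pmap insub s2 : seq V2.
have m1 x : x \in l1' by rewrite mem_pmap_sub.
have m2 y : y \in l2' by rewrite mem_pmap_sub.
have ir b : index (inr b : vert G) (map inr l2' ++ map inl l1') = index b l2'.
  by rewrite index_cat (mem_map inrI) m2 (index_map inrI).
have il a : index (inl a : vert G) (map inr l2' ++ map inl l1') = size l2' + index a l1'.
  rewrite index_cat size_map ?(index_map inlI).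
  by case: ifP => // /mapP [].
apply: good_via.
- by case: (@uniq_du _ _ l1' l2' (pmap_sub_uniq _ u1) (pmap_sub_uniq _ u2)).
- by case=> [x|y]; rewrite mem_cat ?(mem_map inlI) ?(mem_map inrI) ?m1 ?m2 ?orbT.
case=> [x|y].
- exists G1, p1, q1, s1, (val x); split => //; first exact: contr_1.
  case=> [x'|y'] z'; rewrite il ?il ?ir => h [<-].
    by apply: index_pmap_lt; move: h; rewrite ltn_add2l.
  exact: index_head.
- exists G2, p2, q2, s2, (val y); split => //; first exact: contr_2.
  case=> [x'|y'] z'; rewrite ir ?il ?ir => h.
    move=> _; have := leq_ltn_trans (leq_addr _ _) h.
    by rewrite ltnNge ltnW // index_lt_size.
  by move=> [<-]; apply: index_pmap_lt.
Qed.

Lemma inv_es : Inv G1 k -> Inv G2 k -> Inv G k.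
Proof.
move=> i1 i2; case=> [x|y].
- case: (i1 (val x)) => t1 ht1; case: (i2 v2) => t2 ht2.
  exists (map inl (pmap insub t1) ++ map inr (pmap insub (v2 :: t2))).
  by have := good_es_l ht1 ht2; rewrite /= valK.
- case: (i2 (val y)) => t2 ht2; case: (i1 v1) => t1 ht1.
  exists (map inr (pmap insub t2) ++ map inl (pmap insub (v1 :: t1))).
  by have := good_es_r ht1 ht2; rewrite /= valK.
Qed.

End ES.

Lemma inAsum_inv k G : inAsum k G -> Inv G k.
Proof.
elim=> {G} [G hA|G1 G2 G _ i1 _ i2 hiso|G1 G2 G v1 v2 sigma hsigma _ i1 _ i2 _ _ hinj _ hiso].
- exact: inv_base.
- exact: inv_iso hiso (inv_du i1 i2).
- exact: inv_iso hiso (inv_es hinj i1 i2).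
Qed.

Lemma part2 k : 1 <= k -> forall G : mgraph, inAsum k G -> edge_adm G <= 2 * k - 1.
Proof.
move=> hk G hG; case: (exists_good (inAsum_inv hG)) => s hs.
apply: leq_trans (good_adm hs) _.
by rewrite mul2n -addnn -addnBA // leq_addr.
Qed.

Lemma andbl (a b : bool) : a && b -> a. Proof. by case/andP. Qed.
Lemma andbr (a b : bool) : a && b -> b. Proof. by case/andP. Qed.

Section Constr.
Variables (G : mgraph) (A : {set vert G}).

Definition gi_vert : finType := {x : vert G | x \in A}.
Definition gi_edge : finType := {e : edge G | (src e \in A) && (tgt e \in A)}.
Definition gi_src (e : gi_edge) : gi_vert := exist _ (src (val e)) (andbl (valP e)).
Definition gi_tgt (e : gi_edge) : gi_vert := exist _ (tgt (val e)) (andbr (valP e)).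
Lemma gi_loopless e : gi_src e != gi_tgt e.
Proof. by apply/negP => /eqP [] /eqP; apply/negP; exact: loopless. Qed.
Definition Gi := MGraph gi_loopless.

Definition gc_vert : finType := option {x : vert G | x \in A}.
Definition gc_edge : finType := {e : edge G | (src e \in A) || (tgt e \in A)}.
Definition gc_src (e : gc_edge) : gc_vert := insub (src (val e)).
Definition gc_tgt (e : gc_edge) : gc_vert := insub (tgt (val e)).
Lemma gc_loopless e : gc_src e != gc_tgt e.
Proof.
rewrite /gc_src /gc_tgt; apply/negP => /eqP.
case: insubP => [u hu eu|hu]; case: insubP => [u' hu' eu'|hu'] //.
- by move=> [E]; have := loopless (val e); rewrite -eu -eu' E eqxx.
- by move: (valP e); rewrite (negbTE hu) (negbTE hu').
Qed.
Definition Gc := MGraph gc_loopless.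

Lemma card_Gi : #|vert Gi| = #|A|.
Proof. by rewrite card_sig. Qed.

Lemma card_Gc : #|vert Gc| = #|A|.+1.
Proof. by rewrite /= card_option card_sig. Qed.

Lemma gi_good k (s : seq (vert G)) : good k s -> good k (pmap insub s : seq (vert Gi)).
Proof.
move=> [us hs hl]; apply: good_via.
- exact: pmap_sub_uniq.
- by move=> x; rewrite mem_pmap_sub.
move=> u; exists G, (fun x : vert Gi => Some (val x)), (fun e : edge Gi => Some (val e)), s, (val u).
split => //.
- split => // [e e' [<-]|e1 e2 e' [<-] [] /val_inj //]; by left.
- move=> z z' h [<-]; exact: index_pmap_lt.
Qed.

Lemma insub_none (x : vert G) : ((insub x : option {x | x \in A}) == None) = (x \notin A).
Proof. by case: insubP => [u hu _|hu]; rewrite ?hu. Qed.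

Lemma gc_deg_none : deg (None : vert Gc) = dcut A.
Proof.
rewrite /deg /dcut -(card_imset _ val_inj); apply: eq_card => e.
rewrite inE; apply/imsetP/idP => [[e' + ->]|].
  rewrite inE /incident /gc_src /gc_tgt !insub_none /crosses.
  by have := valP e'; case: (src _ \in A); case: (tgt _ \in A).
rewrite /crosses => hc.
have he : (src e \in A) || (tgt e \in A) by move: hc; case: (src e \in A); case: (tgt e \in A).
exists (exist _ e he); last by []. rewrite inE /incident /gc_src /gc_tgt !insub_none.
by move: hc; case: (src e \in A); case: (tgt e \in A).
Qed.

Lemma insub_some (x : vert G) c : ((insub x : option {x | x \in A}) == Some c) = (x == val c).
Proof.
case: insubP => [u hu <-|hu].
  by rewrite (inj_eq (@Some_inj _)) (inj_eq val_inj).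
apply/esym/negbTE; apply: contra hu => /eqP ->; exact: valP.
Qed.

Lemma gc_deg_some c : deg (Some c : vert Gc) <= deg (val c).
Proof.
rewrite /deg -(card_imset _ val_inj); apply: subset_leq_card; apply/subsetP => e.
by case/imsetP => e' + ->; rewrite !inE /incident /gc_src /gc_tgt !insub_some.
Qed.

Lemma gc_dcut (X : {set vert Gc}) :
  dcut X <= dcut [set x | (insub x : option {x : vert G | x \in A}) \in X].
Proof.
rewrite /dcut -(card_imset _ val_inj); apply: subset_leq_card; apply/subsetP => e.
by case/imsetP => e' + ->; rewrite !inE /crosses !inE.
Qed.

End Constr.

Lemma iso_sym (G H : mgraph) : iso H G -> iso G H.
Proof.
case=> fV [fE [[gV fgV gfV] [gE fgE gfE] hE]].
exists gV, gE; split; [by exists fV | by exists fE |] => e.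
have := hE (gE e); rewrite gfE => /orP[]/andP[/eqP E1 /eqP E2].
  by rewrite E1 E2 !fgV !eqxx.
by rewrite E1 E2 !fgV !eqxx orbT.
Qed.

Lemma bij_of (T T' : finType) (f : T -> T') : injective f -> (forall y, exists x, y = f x) -> bijective f.
Proof.
move=> hf hs; apply: (inj_card_bij hf).
have -> : #|T'| = #|[set f x | x in T]|.
  rewrite -cardsT; apply: eq_card => y; rewrite !inE.
  by case: (hs y) => x ->; rewrite imset_f.
exact: leq_imset_card.
Qed.

Lemma iso_of (G H : mgraph) (fV : vert H -> vert G) (fE : edge H -> edge G) :
  injective fV -> (forall y, exists x, y = fV x) ->
  injective fE -> (forall y, exists x, y = fE x) ->
  (forall e, ((src (fE e) == fV (src e)) && (tgt (fE e) == fV (tgt e)))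
          || ((src (fE e) == fV (tgt e)) && (tgt (fE e) == fV (src e)))) ->
  iso G H.
Proof.
move=> i1 s1 i2 s2 h; apply: iso_sym; exists fV, fE; split => //; exact: bij_of.
Qed.

Section IsoDU.
Variables (G : mgraph) (A : {set vert G}).
Hypothesis hA : forall e, ~~ crosses A e.

Definition du_fV (z : vert (dunion (Gi A) (Gi (~: A)))) : vert G :=
  match z with inl x => val x | inr y => val y end.
Definition du_fE (z : edge (dunion (Gi A) (Gi (~: A)))) : edge G :=
  match z with inl x => val x | inr y => val y end.

Lemma iso_du : iso G (dunion (Gi A) (Gi (~: A))).
Proof.
apply: (@iso_of _ _ du_fV du_fE).
- case=> [x|y] [x'|y'] /= E.
  + by rewrite (val_inj E).
  + by have /= := valP y'; rewrite inE -E (valP x).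
  + by have /= := valP y; rewrite inE E (valP x').
  + by rewrite (val_inj E).
- move=> x; case: (boolP (x \in A)) => hx.
    by exists (inl (exist _ x hx)).
  have hx' : x \in ~: A by rewrite inE.
  by exists (inr (exist _ x hx')).
- case=> [x|y] [x'|y'] /= E.
  + by rewrite (val_inj E).
  + by have /= := andbl (valP y'); rewrite inE -E (andbl (valP x)).
  + by have /= := andbl (valP y); rewrite inE E (andbl (valP x')).
  + by rewrite (val_inj E).
- move=> e; have := hA e; rewrite /crosses negbK => /eqP he.
  case: (boolP (src e \in A)) => hs.
    have h : (src e \in A) && (tgt e \in A) by rewrite -he hs.
    by exists (inl (exist _ e h)).
  have h : (src e \in ~: A) && (tgt e \in ~: A) by rewrite !inE -he hs.
  by exists (inr (exist _ e h)).
- by case=> e /=; rewrite !eqxx.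
Qed.

End IsoDU.

Lemma gc_inc_none (G : mgraph) (A : {set vert G}) (e : edge (Gc A)) :
  incident (None : vert (Gc A)) e = (src (val e) \notin A) || (tgt (val e) \notin A).
Proof. by rewrite /incident /= /gc_src /gc_tgt !insub_none. Qed.

Lemma odflt_insub (G : mgraph) (A : {set vert G}) v0 x : x \in A ->
  odflt v0 (omap val (insub x : option {x | x \in A})) = x.
Proof. by case: insubP => [u _ <-|/negP]. Qed.

Lemma odflt_insub' (G : mgraph) (A : {set vert G}) v0 x : x \in A ->
  odflt v0 (omap sval (insub x : option {x | x \in A})) = x.
Proof. by case: insubP => [u _ <-|/negP]. Qed.

Section IsoES.
Variables (G : mgraph) (C : {set vert G}) (d0 : edge (Gc (~: C))).
Let G1 := Gc C.
Let G2 := Gc (~: C).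
Definition es_sigma (e : edge G1) : edge G2 := odflt d0 (insub (val e)).

Lemma es_sigma_val e : incident (None : vert G1) e -> val (es_sigma e) = val e.
Proof.
rewrite gc_inc_none => h; rewrite /es_sigma.
case: insubP => [u _ <-|hn] //.
by rewrite !inE h in hn.
Qed.

Lemma es_hsig e : incident (None : vert G1) e -> incident (None : vert G2) (es_sigma e).
Proof.
move=> h; rewrite gc_inc_none (es_sigma_val h) !inE !negbK; exact: (valP e).
Qed.

Let GS := @edge_sum G1 G2 None None es_sigma es_hsig.
Let v0 := src (val d0).

Definition es_fV (z : vert GS) : vert G :=
  match z with inl z1 => odflt v0 (omap val (val z1)) | inr z2 => odflt v0 (omap val (val z2)) end.
Definition es_fE (e : edge GS) : edge G :=
  match e with inl (inl e1) => val (val e1) | inl (inr e2) => val (val e2) | inr e1 => val (val e1) end.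

Lemma es_fV_inj : injective es_fV.
Proof.
case=> [[[c1|] h1]|[[c1|] h1]] // [[[c2|] h2]|[[c2|] h2]] //= E.
- by have := val_inj E => ?; subst; rewrite (bool_irrelevance h1 h2).
- by have /= := valP c2; rewrite inE -E (valP c1).
- by have /= := valP c1; rewrite inE E (valP c2).
- by have := val_inj E => ?; subst; rewrite (bool_irrelevance h1 h2).
Qed.

Lemma es_fV_surj y : exists x, y = es_fV x.
Proof.
case: (boolP (y \in C)) => hy.
  by exists (inl (exist _ (Some (exist _ y hy)) isT)).
have hy' : y \in ~: C by rewrite inE.
by exists (inr (exist _ (Some (exist _ y hy')) isT)).
Qed.

Lemma es_fE_inj : injective es_fE.
Proof.
case=> [[[a ha]|[a ha]]|[a ha]] [[[b hb]|[b hb]]|[b hb]] /= E;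
  have ha' := ha; have hb' := hb; rewrite gc_inc_none in ha'; rewrite gc_inc_none in hb';
  try (by have := val_inj E => ?; subst; rewrite (bool_irrelevance ha hb));
  exfalso; move: ha' hb' (valP a) (valP b) => /=; rewrite ?inE E;
  by case: (src (sval b) \in C); case: (tgt (sval b) \in C).
Qed.

Lemma es_fE_surj y : exists x, y = es_fE x.
Proof.
case: (boolP (src y \in C)) => hs; case: (boolP (tgt y \in C)) => ht.
- have h1 : (src y \in C) || (tgt y \in C) by rewrite hs.
  have h2 : ~~ incident (None : vert G1) (exist _ y h1) by rewrite gc_inc_none /= hs ht.
  by exists (inl (inl (exist _ (exist _ y h1) h2))).
- have h1 : (src y \in C) || (tgt y \in C) by rewrite hs.
  have h2 : incident (None : vert G1) (exist _ y h1) by rewrite gc_inc_none /= ht orbT.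
  by exists (inr (exist _ (exist _ y h1) h2)).
- have h1 : (src y \in C) || (tgt y \in C) by rewrite ht orbT.
  have h2 : incident (None : vert G1) (exist _ y h1) by rewrite gc_inc_none /= hs.
  by exists (inr (exist _ (exist _ y h1) h2)).
- have h1 : (src y \in ~: C) || (tgt y \in ~: C) by rewrite inE hs.
  have h2 : ~~ incident (None : vert G2) (exist _ y h1) by rewrite gc_inc_none /= !inE hs ht.
  by exists (inl (inr (exist _ (exist _ y h1) h2))).
Qed.

Lemma es_orient e : ((src (es_fE e) == es_fV (src e)) && (tgt (es_fE e) == es_fV (tgt e)))
          || ((src (es_fE e) == es_fV (tgt e)) && (tgt (es_fE e) == es_fV (src e))).
Proof.
case: e => [[[a ha]|[a ha]]|[a ha]].
- have ha' := ha; rewrite gc_inc_none negb_or !negbK in ha'; case/andP: ha' => hs ht.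
  by rewrite /= /gc_src /gc_tgt !odflt_insub // !eqxx.
- have ha' := ha; rewrite gc_inc_none negb_or !negbK in ha'; case/andP: ha' => hs ht.
  by rewrite /= /gc_src /gc_tgt !odflt_insub // !eqxx.
- have ha' := ha; rewrite gc_inc_none in ha'.
  have := valP a; rewrite /= /other /gc_src /gc_tgt !insub_none (es_sigma_val ha) !inE !negbK.
  move: ha'; case: (boolP (src (val a) \in C)) => hs; case: (boolP (tgt (val a) \in C)) => ht //= _ _.
  + rewrite /gc_src /gc_tgt (es_sigma_val ha) !odflt_insub' ?inE ?eqxx //.
  + rewrite /gc_src /gc_tgt (es_sigma_val ha) !odflt_insub' ?inE ?eqxx ?orbT //.
Qed.

Lemma iso_es : iso G GS.
Proof.
exact: (@iso_of _ _ es_fV es_fE es_fV_inj es_fV_surj es_fE_inj es_fE_surj es_orient).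
Qed.

End IsoES.

Lemma index_map_in (T1 T2 : eqType) (f : T1 -> T2) (l : seq T1) x :
  {in l &, injective f} -> x \in l -> index (f x) (map f l) = index x l.
Proof.
elim: l => //= a l IH hinj hx'; have hx := hx'; rewrite inE in hx.
case: (a =P x) => [->|ax]; first by rewrite eqxx.
have -> : (f a == f x) = false.
  by apply/negbTE/negP => /eqP E; apply: ax; apply: hinj; rewrite ?mem_head.
congr _.+1; apply: IH.
  by move=> y z hy hz; apply: hinj; rewrite inE ?hy ?hz orbT.
by case/orP: hx => // /eqP E; case: ax.
Qed.

Lemma index_filter_lt (T : eqType) (p : pred T) (s : seq T) x y : p x -> p y ->
  index x (filter p s) < index y (filter p s) -> index x s < index y s.
Proof.
move=> px py; elim: s => //= a s IH; case: ifP => pa /=.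
  by case: (a == x) => //; case: (a == y).
have -> : (a == x) = false by apply/negbTE; apply: contraFN pa => /eqP ->.
by have -> : (a == y) = false by apply/negbTE; apply: contraFN pa => /eqP ->.
Qed.

Section GcGood.
Variables (G : mgraph) (k : nat) (s : seq (vert G)) (C : {set vert G}) (h : vert G).
Hypothesis hs : good k s.
Hypothesis hC : h \in C.
Hypothesis disC : forall x, x \in C -> x \notin before s h.
Hypothesis dC : dcut C <= lambda (before s h) h.
Let B := ~: C.
Let q (x : vert G) : option {x | x \in B} := insub x.
Let rep (z : option {x | x \in B}) : vert G := if z is Some x then val x else h.

Lemma gc_good : exists t, good k (t : seq (vert (Gc B))).
Proof.
case: hs => us hall hl.
have hlam : lambda (before s h) h <= k := hl h.
have qrep z : q (rep z) = z.
  case: z => [x|] /=; first by rewrite /q valK.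
  by rewrite /q; case: insubP => // u; rewrite inE hC.
have repq x : rep (q x) = if x \in C then h else x.
  rewrite /q; case: insubP => [u hu eu|hu] /=; rewrite inE in hu.
    by rewrite (negbTE hu) eu.
  by rewrite negbK in hu; rewrite hu.
pose keep x := rep (q x) == x.
pose l := filter keep s.
have qinj : {in l &, injective q}.
  move=> x y; rewrite !mem_filter => /andP[/eqP kx _] /andP[/eqP ky _] E.
  by rewrite -kx -ky E.
have repl z : rep z \in l by rewrite mem_filter /keep qrep eqxx hall.
have idx z : index z (map q l) = index (rep z) l.
  by rewrite -{1}(qrep z) index_map_in.
pose t : seq (vert (Gc B)) := map q l.
exists t; split.
- by rewrite map_inj_in_uniq // filter_uniq.
- by move=> z; rewrite -(qrep z) map_f.
move=> w.
have hord (z : vert (Gc B)) : z \in before t w -> index (rep z) s < index (rep w) s.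
  rewrite inE !idx; apply: index_filter_lt; by rewrite /keep qrep.
case: w hord => [w0|] hord; last first.
  apply: leq_trans (lam_deg (before_irr _ _)) _.
  by rewrite gc_deg_none dcutC; apply: leq_trans dC hlam.
set x := val w0.
have xC : x \notin C by have := valP w0; rewrite inE.
have [X [xX disX dX]] := lam_ex (before_irr s x).
have dXk : dcut X <= k := leq_trans dX (hl x).
pose X' : {set vert (Gc B)} := [set z | rep z \in X].
apply: leq_trans (@lam_cut (Gc B) _ X' _ _ _) _.
- by rewrite inE.
- move=> z; rewrite inE => hz; apply/negP => /hord hb.
  by have := disX _ hz; rewrite inE hb.
apply: leq_trans (gc_dcut X') _.
set Y := [set y | _].
have hY y : (y \in Y) = (if y \in C then h \in X else y \in X).
  by rewrite inE inE -/(q y) repq; case: (y \in C).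
case: (boolP (h \in X)) => hX.
- have hI : lambda (before s h) h <= dcut (X :&: C).
    apply: lam_cut; first by rewrite inE hX hC.
    by move=> y; rewrite inE => /andP[_ /disC].
  have : dcut Y + dcut (X :&: C) <= dcut X + dcut C.
    apply: dcut_sub => y; rewrite ?hY ?inE //.
    by case: (y \in C); rewrite ?hX ?orbT ?orbF.
  move=> H; have := leq_trans H (leq_add (leqnn _) (leq_trans dC hI)).
  by rewrite leq_add2r => /leq_trans; apply.
- have hV : lambda (before s h) h <= dcut (C :\: X).
    apply: lam_cut; first by rewrite inE hX hC.
    by move=> y; rewrite inE => /andP[_ /disC].
  have : dcut Y + dcut (C :\: X) <= dcut X + dcut C.
    apply: dcut_posi => y; last by rewrite !inE andbC.
    by rewrite hY; case: (y \in C); rewrite ?(negbTE hX) ?andbT ?andbF.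
  move=> H; have := leq_trans H (leq_add (leqnn _) (leq_trans dC hV)).
  by rewrite leq_add2r => /leq_trans; apply.
Qed.

End GcGood.

Lemma gc_inA (G : mgraph) k (C : {set vert G}) h (hC : h \in C) :
  (forall x, x \in C -> x != h -> deg x <= k) -> dcut C <= k -> inA k (Gc C).
Proof.
move=> hlow hd; rewrite /inA.
apply: leq_trans (subset_leq_card (_ : _ \subset [set (Some (exist _ h hC) : vert (Gc C))])) _.
  apply/subsetP => z; rewrite !inE; case: z => [c|] hz; last first.
    by move: hz; rewrite gc_deg_none ltnNge hd.
  case: (val c =P h) => [E|/eqP ne].
    by apply/eqP; congr Some; apply: val_inj.
  have := leq_ltn_trans (hlow _ (valP c) ne) (leq_trans hz (gc_deg_some c)).
  by rewrite ltnn.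
by rewrite cards1.
Qed.

Lemma index_inj (T : eqType) (s : seq T) x y : x \in s -> y \in s -> index x s = index y s -> x = y.
Proof. move=> hx hy E; by rewrite -(nth_index x hx) E nth_index. Qed.

Lemma part1 k : forall n (G : mgraph), #|vert G| <= n -> edge_adm G <= k -> inAsum k G.
Proof.
elim=> [|n IH] G hn hadm.
  apply: inAsum_base; rewrite /inA; apply: leq_trans (max_card _) _.
  by apply: leq_trans hn _.
case: (adm_good hadm) => s hs; case: (hs) => us hall hl.
pose H := [set v : vert G | k < deg v].
case: (leqP #|H| 1) => hH; first exact: inAsum_base.
have [a ha] : exists a, a \in H by apply/set0Pn; rewrite -card_gt0; apply: ltnW.
have [b hb] : exists b, b \in H :\ a.
  apply/set0Pn; rewrite -card_gt0; move: hH; rewrite (cardsD1 a H) ha.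
  by rewrite add1n ltnS.
case: (@arg_maxnP _ a (fun x => x \in H) (fun x => index x s) ha) => h hh hmax.
have hhk : k < deg h by move: hh; rewrite inE.
have [x0 hx0] : exists x0, index x0 s < index h s.
  have hb' : b \in H by move: hb; rewrite !inE => /andP[].
  have nab : b != a by move: hb; rewrite !inE => /andP[].
  have hbh : index b s <= index h s := hmax b hb'.
  have hah : index a s <= index h s := hmax a ha.
  case: (a =P h) => [E|/eqP ne].
    exists b; rewrite ltn_neqAle hbh andbT; apply/negP => /eqP E'.
    by move: nab; rewrite (index_inj (hall b) (hall h) E') E eqxx.
  exists a; rewrite ltn_neqAle hah andbT; apply/negP => /eqP E'.
  by move: ne; rewrite (index_inj (hall a) (hall h) E') eqxx.
have [C [hC disC dC]] := lam_ex (before_irr s h).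
have hlam := hl h.
have x0C : x0 \notin C by apply/negP => /disC; rewrite inE hx0.
have hlow x : x \in C -> x != h -> deg x <= k.
  move=> xC xh; rewrite leqNgt; apply/negP => hx.
  have hle : index x s <= index h s by apply: hmax; rewrite inE.
  have := disC _ xC; rewrite inE -leqNgt => hge.
  by move: xh; rewrite (index_inj (hall x) (hall h) (anti_leq (introT andP (conj hle hge)))) eqxx.
have cardC : #|C| < #|vert G|.
  rewrite -(cardsC C) -addn1 leq_add2l card_gt0; apply/set0Pn; exists x0; by rewrite inE.
have cardCc : #|~: C| < #|vert G|.
  rewrite -(cardsC C) -add1n leq_add2r card_gt0; apply/set0Pn; by exists h.
have cardC2 : 1 < #|C|.
  have : ~~ ([set e | incident h e] \subset [set e | crosses C e]).
    apply/negP => /subset_leq_card hsub.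
    have : deg h <= k := leq_trans hsub (leq_trans dC hlam).
    by rewrite leqNgt hhk.
  case/subsetPn => y; rewrite !inE => hyi hyc.
  apply: (@card_two _ C h (other h y) hC); last by rewrite eq_sym other_neq.
  move: hyi hyc; rewrite /other /incident /crosses negbK.
  case: (src y =P h) => [E|_] /=.
    by move=> _ /eqP hc; rewrite -hc E.
  by move=> /eqP E /eqP hc; rewrite hc E.
case: (posnP (dcut C)) => hd.
- have hcr e : ~~ crosses C e.
    apply/negP => hce; move: hd; rewrite /dcut => /eqP; rewrite cards_eq0 => /eqP E.
    by have := in_set0 e; rewrite -E inE hce.
  apply: (inAsum_union _ _ (iso_du hcr)).
  + apply: IH; first by rewrite card_Gi -ltnS (leq_trans cardC hn).
    exact: good_adm (gi_good C hs).
  + apply: IH; first by rewrite card_Gi -ltnS (leq_trans cardCc hn).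
    exact: good_adm (gi_good (~: C) hs).
- have [e0 he0] : exists e0, e0 \in [set e | crosses C e] by apply/set0Pn; rewrite -card_gt0.
  have he0' : (src e0 \in ~: C) || (tgt e0 \in ~: C).
    by move: he0; rewrite !inE /crosses; case: (src e0 \in C); case: (tgt e0 \in C).
  pose d0 : edge (Gc (~: C)) := exist _ e0 he0'.
  apply: (@inAsum_sum k (Gc C) (Gc (~: C)) G None None (es_sigma d0) (@es_hsig G C d0)).
  + apply: inAsum_base; apply: (gc_inA hC hlow); exact: leq_trans dC hlam.
  + apply: IH.
      by rewrite card_Gc; have := cardsC C; lia.
    by case: (gc_good hs hC disC dC) => t ht; exact: good_adm ht.
  + by rewrite !gc_deg_none dcutC.
  + by rewrite gc_deg_none hd /=; apply: leq_trans dC hlam.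
  + move=> e1 e2 h1 h2 E; apply: val_inj.
    by rewrite -(es_sigma_val d0 h1) -(es_sigma_val d0 h2) E.
  + move=> f hf.
    have hf' : (src (val f) \in C) || (tgt (val f) \in C).
      by move: hf; rewrite gc_inc_none !inE !negbK.
    have hi : incident (None : vert (Gc C)) (exist _ (val f) hf').
      by rewrite gc_inc_none /=; have := valP f; rewrite !inE.
    exists (exist _ (val f) hf') => //; apply: val_inj.
    by rewrite (es_sigma_val d0 hi).
  + exact: iso_es.
Qed.

Theorem mainTheorem5 :
  (forall (G : mgraph) (k : nat), edge_adm G <= k -> inAsum k G) /\
  (forall (k : nat), 1 <= k ->
     forall G : mgraph, inAsum k G -> edge_adm G <= 2 * k - 1).
Proof.
split; first by move=> G k; exact: (part1 (leqnn _)).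
exact: part2.
Qed.
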